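(* Let $a,b,c\in\mathbb{R}$ with $ac<0$ and $b\neq 0$. Let $\{P_m(z)\}_{m\geq 0}$ be the sequence of functions of $z$ generated by \[ \sum_{m=0}^\infty P_m(z)\, t^m=\frac{1}{(at^2+bt+c)(1-tz)}. \] Then for every $m\geq 0$, all the zeros of $P_m(z)$ lie in the closed disk $\{z\in\mathbb{C}: |z|\leq 1/|\alpha|\}$, where $\alpha$ is the zero of $at^2+bt+c$ of smallest modulus.
   Context: A sequence $\{P_m(z)\}$ is generated by $f(t,z)$ if, for each $z\in\mathbb{C}$, $f(t,z)$ is analytic in $t$ in a neighborhood of $t=0$ and $P_m(z)$ is the coefficient of $t^m$ in the power series expansion of $f(t,z)$ in $t$ about $0$. *)

(* Defs.v *)
From Stdlib Require Import Reals.
From Coquelicot Require Import Coquelicot.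
Open Scope C_scope.

(* By uniqueness of power series coefficients this
   determines P m z as the m-th Taylor coefficient of f(., z) at 0. *)
Definition generates (f : C -> C -> C) (P : nat -> C -> C) : Prop :=
  forall z : C, exists eps : posreal,
    forall t : C, Cmod t < eps ->
      is_pseries (K := C_AbsRing) (V := C_NormedModule) (fun m => P m z) t (f t z).

Definition genfun (a b c : R) (t z : C) : C :=
  / ((RtoC a * t * t + RtoC b * t + RtoC c) * (1 - t * z)).

(* Main.v *)
Require Import Defs.
From Stdlib Require Import Reals Lra Lia.
From Coquelicot Require Import Coquelicot.
Open Scope C_scope.


Lemma pow_n_C (x : C) (n : nat) : @pow_n C_AbsRing x n = x ^ n.
Proof. induction n; simpl; [reflexivity|]. rewrite IHn. reflexivity. Qed.

Lemma Cmult_integral' (x y : C) : x * y = 0 -> x = 0 \/ y = 0.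
Proof.
  intros H. destruct (Ceq_dec x 0) as [Hx|Hx]; [left; auto|right].
  replace y with (/x * (x * y)) by (field; auto). rewrite H. ring.
Qed.

Lemma sum_geom_C (q : C) (n : nat) : q <> 1 ->
  @sum_n C_AbelianMonoid (fun k => q ^ k) n = (1 - q ^ (S n)) / (1 - q).
Proof.
  intros Hq. assert (1 - q <> 0) by (intro E; apply Hq; 
    replace q with (1 - (1 - q)) by ring; rewrite E; ring).
  induction n.
  - rewrite sum_O. simpl. field; auto.
  - rewrite sum_Sn, IHn. change plus with Cplus. simpl. field; auto.
Qed.

Lemma geom_C (q : C) : (Cmod q < 1)%R ->
  @is_series C_AbsRing C_NormedModule (fun n => q ^ n) (/ (1 - q)).
Proof.
  intros Hq.
  assert (Hq1 : q <> 1) by (intro E; rewrite E, Cmod_1 in Hq; lra).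
  assert (Hd : 1 - q <> 0) by (intro E; apply Hq1;
    replace q with (1 - (1 - q)) by ring; rewrite E; ring).
  assert (Hdpos : (0 < Cmod (1 - q))%R) by (apply Cmod_gt_0; auto).
  unfold is_series. apply filterlim_locally. intros eps.
  assert (Hc : (Rabs (Cmod q) < 1)%R) by (rewrite Rabs_pos_eq; auto; apply Cmod_ge_0).
  destruct (pow_lt_1_zero _ Hc (eps * Cmod (1 - q))) as [N HN].
  { apply Rmult_lt_0_compat; [apply cond_pos|auto]. }
  exists N. intros n Hn.
  apply (@norm_compat1 C_AbsRing C_NormedModule).
  change norm with Cmod. change minus with Cminus.
  rewrite sum_geom_C by auto.
  replace ((1 - q ^ S n) / (1 - q) - / (1 - q)) with (- (q ^ S n) / (1 - q)) by (field; auto).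
  rewrite Cmod_div by auto. rewrite Cmod_opp, Cmod_pow.
  apply (Rmult_lt_reg_r (Cmod (1 - q))); auto.
  unfold Rdiv. rewrite Rmult_assoc, Rinv_l by lra. rewrite Rmult_1_r.
  specialize (HN (S n) ltac:(lia)). rewrite Rabs_pos_eq in HN; auto.
  apply pow_le, Cmod_ge_0.
Qed.
Lemma pow_n_R (x : R) (n : nat) : @pow_n R_Ring x n = (x ^ n)%R.
Proof. induction n; simpl; [reflexivity|]. rewrite IHn. reflexivity. Qed.

Lemma sum_n_fst (f : nat -> C) n :
  fst (@sum_n C_AbelianMonoid f n) = @sum_n R_AbelianMonoid (fun k => fst (f k)) n.
Proof.
  induction n.
  - rewrite !sum_O. reflexivity.
  - rewrite !sum_Sn, <- IHn. reflexivity.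
Qed.

Lemma sum_n_snd (f : nat -> C) n :
  snd (@sum_n C_AbelianMonoid f n) = @sum_n R_AbelianMonoid (fun k => snd (f k)) n.
Proof.
  induction n.
  - rewrite !sum_O. reflexivity.
  - rewrite !sum_Sn, <- IHn. reflexivity.
Qed.

Lemma split_pseries (d : nat -> C) (x : R) (l : C) :
  @is_pseries C_AbsRing C_NormedModule d (RtoC x) l ->
  is_pseries (fun n => Re (d n)) x (Re l) /\ is_pseries (fun n => Im (d n)) x (Im l).
Proof.
  unfold is_pseries, is_series. intros H.
  pose proof (proj1 (@filterlim_locally nat C_NormedModule eventually _ _ l) H) as H0; clear H; rename H0 into H.
  split; apply (proj2 (filterlim_locally _ _)); intros eps; specialize (H eps).
  all: idtac.
  all: (eapply filter_imp; [|exact H]); intros n [H1 H2].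
  - rewrite sum_n_fst in H1.
    assert (E : forall k, fst (@scal C_AbsRing C_NormedModule (pow_n (K:=C_AbsRing) (RtoC x) k) (d k))
       = @scal R_AbsRing R_NormedModule (pow_n x k) (Re (d k))).
    { intros k. rewrite pow_n_C, <- RtoC_pow. replace (@pow_n R_Ring x k) with (pow x k) by (symmetry; apply pow_n_R).
      change (@scal R_AbsRing R_NormedModule) with Rmult. change (@scal C_AbsRing C_NormedModule) with Cmult.
      simpl. unfold Re, Im. ring. }
    rewrite (sum_n_ext _ _ n E) in H1. exact H1.
  - rewrite sum_n_snd in H2.
    assert (E : forall k, snd (@scal C_AbsRing C_NormedModule (pow_n (K:=C_AbsRing) (RtoC x) k) (d k))
       = @scal R_AbsRing R_NormedModule (pow_n x k) (Im (d k))).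
    { intros k. rewrite pow_n_C, <- RtoC_pow. replace (@pow_n R_Ring x k) with (pow x k) by (symmetry; apply pow_n_R).
      change (@scal R_AbsRing R_NormedModule) with Rmult. change (@scal C_AbsRing C_NormedModule) with Cmult.
      simpl. unfold Re, Im. ring. }
    rewrite (sum_n_ext _ _ n E) in H2. exact H2.
Qed.
Open Scope R_scope.
Lemma radius_pos (a : nat -> R) (eps : posreal) :
  (forall x, Rabs x < eps -> ex_pseries a x) -> Rbar_lt 0 (CV_radius a).
Proof.
  intros H.
  set (x := (eps / 2)%R).
  assert (Hx : 0 < Rabs x) by (unfold x; rewrite Rabs_pos_eq; destruct eps; simpl; lra).
  assert (Hx2 : Rabs x < eps) by (unfold x; rewrite Rabs_pos_eq; destruct eps; simpl; lra).
  specialize (H x Hx2).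
  apply ex_series_lim_0 in H.
  assert (L : is_lim_seq (fun n => a n * x ^ n) 0).
  { eapply is_lim_seq_ext; [|exact H]. intros n. simpl.
    change scal with Rmult. rewrite pow_n_R. ring. }
  destruct (Rbar_lt_dec (CV_radius a) (Rabs x)) as [Hl|Hl].
  - exfalso. exact (CV_disk_outside a x Hl L).
  - apply Rbar_not_lt_le in Hl. eapply Rbar_lt_le_trans; [|exact Hl]. simpl. exact Hx.
Qed.

Lemma uniqR (a b : nat -> R) (F : R -> R) (eps : posreal) :
  (forall x, Rabs x < eps -> is_pseries a x (F x)) ->
  (forall x, Rabs x < eps -> is_pseries b x (F x)) ->
  forall n, a n = b n.
Proof.
  intros Ha Hb n.
  apply PSeries_ext_recip.
  - apply (radius_pos a eps). intros x Hx. eexists. apply Ha; auto.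
  - apply (radius_pos b eps). intros x Hx. eexists. apply Hb; auto.
  - exists eps. intros y Hy. 
    assert (Ry : Rabs y < eps).
    { unfold ball in Hy; simpl in Hy. unfold AbsRing_ball in Hy. 
      unfold minus, plus, opp in Hy; simpl in Hy. rewrite Ropp_0, Rplus_0_r in Hy. exact Hy. }
    rewrite (is_pseries_unique a y (F y)) by auto.
    rewrite (is_pseries_unique b y (F y)) by auto. reflexivity.
Qed.

Lemma uniqC (a b : nat -> C) (F : C -> C) (eps : posreal) :
  (forall t, (Cmod t < eps)%R -> @is_pseries C_AbsRing C_NormedModule a t (F t)) ->
  (forall t, (Cmod t < eps)%R -> @is_pseries C_AbsRing C_NormedModule b t (F t)) ->
  forall n, a n = b n.
Proof.
  intros Ha Hb n.
  assert (HR : forall n, Re (a n) = Re (b n)).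
  { apply (uniqR _ _ (fun x => Re (F (RtoC x))) eps); intros x Hx.
    - apply (split_pseries a x (F x)), Ha. rewrite Cmod_R; auto.
    - apply (split_pseries b x (F x)), Hb. rewrite Cmod_R; auto. }
  assert (HI : forall n, Im (a n) = Im (b n)).
  { apply (uniqR _ _ (fun x => Im (F (RtoC x))) eps); intros x Hx.
    - apply (split_pseries a x (F x)), Ha. rewrite Cmod_R; auto.
    - apply (split_pseries b x (F x)), Hb. rewrite Cmod_R; auto. }
  apply injective_projections; [apply HR|apply HI].
Qed.
Open Scope R_scope.

Fixpoint Hs (r : R) (n : nat) : R :=
  match n with O => 1 | S k => 1 + r * Hs r k end.

Lemma Hs_bounds r : -1 < r < 0 -> forall n, 0 < Hs r n <= 1.
Proof.
  intros Hr n. induction n; simpl; [lra|].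
  assert (0 <= (-r) * (1 - Hs r n)) by (apply Rmult_le_pos; lra).
  assert (0 < (-r) * Hs r n) by (apply Rmult_lt_0_compat; lra). lra.
Qed.

Lemma Hs_pow u r : forall n, u ^ (S n) - (r*u) ^ (S n) = (u - r*u) * u^n * Hs r n.
Proof.
  induction n.
  - simpl. ring.
  - change (u ^ S (S n)) with (u * u ^ S n). change ((r*u) ^ S (S n)) with ((r*u) * (r*u) ^ S n).
    change (u ^ S n) with (u * u ^ n) at 2. simpl Hs.
    transitivity ((u - r*u) * (u * u^n) + r * u * ((u - r*u) * u^n * Hs r n)); [|ring].
    rewrite <- IHn. simpl. ring.
Qed.

Lemma final_ineq (Zm uu K r h0 h1 : R) (m : nat) :
  0 < uu -> uu < Zm -> 0 < K -> K <= Zm ^ m -> -1 < r < 0 -> 0 < h0 -> h1 = 1 + r * h0 -> 0 < h1 ->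
  Zm ^ (S (S m)) <= Zm * (uu * K * h1) + uu * (- r * uu) * (K * h0) -> False.
Proof.
  intros. simpl in H7.
  assert (A : uu * (- r * uu) * (K * h0) < Zm * (uu * K * (- r * h0))).
  { replace (uu * (- r * uu) * (K * h0)) with (uu * (uu * K * (-r * h0))) by ring.
    apply Rmult_lt_compat_r; [|lra]. repeat apply Rmult_lt_0_compat; lra. }
  assert (B : Zm * (uu * K) < Zm * (Zm * Zm ^ m)).
  { apply Rmult_lt_compat_l; [lra|].
    assert (uu*K < Zm*K) by (apply Rmult_lt_compat_r; lra).
    assert (Zm*K <= Zm*Zm^m) by (apply Rmult_le_compat_l; lra). lra. }
  assert (C0 : Zm * (uu * K * h1) + Zm * (uu * K * (- r * h0)) = Zm * (uu * K)) by (rewrite H5; ring).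
  lra.
Qed.

Open Scope C_scope.

Lemma geom_ps (w t : C) : (Cmod (w*t) < 1)%R ->
  @is_pseries C_AbsRing C_NormedModule (fun n => w ^ n) t (/ (1 - w*t)).
Proof.
  intros H. unfold is_pseries. eapply is_series_ext; [|apply (geom_C _ H)].
  intros n. change (@scal C_AbsRing C_NormedModule) with Cmult.
  replace (@pow_n C_AbsRing t n) with (t ^ n) by (symmetry; apply pow_n_C). rewrite Cpow_mult_l. apply Cmult_comm.
Qed.

Lemma one_minus_nz (q : C) : (Cmod q < 1)%R -> 1 - q <> 0.
Proof.
  intros H E. assert (q = 1) by (replace q with (1 - (1 - q)) by ring; rewrite E; ring).
  subst. rewrite Cmod_1 in H. lra.
Qed.

Lemma core (a b c al be : R) (P : nat -> C -> C) (m : nat) (z : C) :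
  (a*c < 0)%R -> b <> 0%R -> c = (a*al*be)%R -> (-b = a*(al+be))%R -> (Rabs al <= Rabs be)%R ->
  generates (genfun a b c) P -> P m z = 0 -> (Cmod z <= / Rabs al)%R.
Proof.
  intros Hac Hb Hc Hbb Hmin Hgen HP.
  assert (Ha0 : a <> 0%R) by (intro E; rewrite E in Hac; lra).
  assert (Hc0 : c <> 0%R) by (intro E; rewrite E in Hac; lra).
  assert (Hal : al <> 0%R) by (intro E; apply Hc0; rewrite Hc, E; ring).
  assert (Hbe : be <> 0%R) by (intro E; apply Hc0; rewrite Hc, E; ring).
  assert (Hab : (al*be < 0)%R).
  { destruct (Rlt_or_le (al*be) 0) as [H|H]; auto. exfalso.
    assert (0 <= a*a*(al*be))%R by (apply Rmult_le_pos; nra).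
    rewrite Hc in Hac. nra. }
  assert (Hlt : (Rabs al < Rabs be)%R).
  { destruct (Rle_lt_or_eq_dec _ _ Hmin) as [H|H]; auto. exfalso.
    assert (E : (Rabs al * Rabs al = Rabs be * Rabs be)%R) by (rewrite H; ring).
    rewrite <- !Rabs_mult, !Rabs_pos_eq in E by nra.
    assert (E2 : ((al - be) * (al + be) = 0)%R) by (replace ((al - be) * (al + be))%R with (al*al - be*be)%R by ring; lra).
    apply Rmult_integral in E2. destruct E2 as [E2|E2].
    - assert (al = be) by lra. subst. nra.
    - apply Hb. replace b with (- (a * (al + be)))%R by lra. rewrite E2. ring. }
  set (u := (/ al)%R). set (r := (al / be)%R). set (v := (r * u)%R).
  assert (Hu0 : u <> 0%R) by (apply Rinv_neq_0_compat; auto).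
  assert (Hr : (-1 < r < 0)%R).
  { assert (E : (Rabs r * Rabs be = Rabs al)%R) by (rewrite <- Rabs_mult; f_equal; unfold r; field; auto).
    assert (Hbp : (0 < Rabs be)%R) by (apply Rabs_pos_lt; auto).
    assert (Hr1 : (Rabs r < 1)%R) by nra.
    assert (Hrn : (r < 0)%R).
    { assert (E2 : (r * (be * be) = al * be)%R) by (unfold r; field; auto).
      assert (0 < be * be)%R by nra. nra. }
    apply Rabs_def2 in Hr1. lra. }
  apply Rnot_lt_le. intros Hz.
  assert (Hu : Rabs u = (/ Rabs al)%R) by (unfold u; apply Rabs_inv).
  rewrite <- Hu in Hz.
  assert (Hup : (0 < Rabs u)%R) by (apply Rabs_pos_lt; auto).
  assert (Hv : (Rabs v = - r * Rabs u)%R) by (unfold v; rewrite Rabs_mult, (Rabs_left r); lra).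
  assert (Hvu : (Rabs v < Rabs u)%R) by nra.
  set (U := RtoC u). set (V := RtoC v).
  assert (HU : Cmod U = Rabs u) by apply Cmod_R.
  assert (HV : Cmod V = Rabs v) by apply Cmod_R.
  assert (HUV : U - V <> 0).
  { intro E. unfold U, V in E. rewrite <- RtoC_minus in E. apply (f_equal fst) in E. simpl in E.
    unfold v in E. assert ((u * (1 - r) = 0)%R) by lra. apply Rmult_integral in H. lra. }
  assert (HUz : U - z <> 0).
  { intro E. assert (z = U) by (replace z with (U - (U - z)) by ring; rewrite E; ring).
    rewrite H, HU in Hz. lra. }
  assert (HVz : V - z <> 0).
  { intro E. assert (z = V) by (replace z with (V - (V - z)) by ring; rewrite E; ring).
    rewrite H, HV in Hz. lra. }
  assert (Hquad : forall t, RtoC a * t * t + RtoC b * t + RtoC c = RtoC c * (1 - U * t) * (1 - V * t)).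
  { intros t.
    assert (E1 : (c * u * v = a)%R) by (unfold v, r, u; rewrite Hc; field; auto).
    assert (E2 : (c * (u + v) = - b)%R) by (unfold v, r, u; rewrite Hbb, Hc; field; auto).
    replace (RtoC a) with (RtoC c * U * V) by (unfold U, V; rewrite <- !RtoC_mult; f_equal; exact E1).
    replace (RtoC b) with (- (RtoC c * (U + V))) by (unfold U, V; rewrite <- RtoC_plus, <- RtoC_mult, <- RtoC_opp; f_equal; lra).
    ring. }
  destruct (Hgen z) as [eps Heps].
  assert (Hzp : (0 < Cmod z)%R) by lra.
  assert (He0 : (0 < Rmin eps (/ Cmod z))%R) by (apply Rmin_pos; [apply cond_pos | apply Rinv_0_lt_compat; lra]).
  set (e0 := mkposreal _ He0).
  assert (Hsmall : forall t, (Cmod t < e0)%R ->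
    (Cmod (U*t) < 1)%R /\ (Cmod (V*t) < 1)%R /\ (Cmod (z*t) < 1)%R /\ (Cmod t < eps)%R).
  { intros t Ht. simpl in Ht.
    assert (H1 : (Cmod t < eps)%R) by (eapply Rlt_le_trans; [exact Ht| apply Rmin_l]).
    assert (H2 : (Cmod t < / Cmod z)%R) by (eapply Rlt_le_trans; [exact Ht| apply Rmin_r]).
    assert (H3 : (Cmod z * Cmod t < 1)%R).
    { replace 1%R with (Cmod z * / Cmod z)%R by (field; lra). apply Rmult_lt_compat_l; lra. }
    assert (H4 : (0 <= Cmod t)%R) by apply Cmod_ge_0.
    rewrite !Cmod_mult, HU, HV. repeat split; auto; nra. }
  set (A := U^2 / ((U - V) * (U - z))).
  set (B := V^2 / ((V - U) * (V - z))).
  set (D := z^2 / ((z - U) * (z - V))).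
  set (p := fun n : nat => / RtoC c * (A * U^n + B * V^n + D * z^n)).
  assert (Hc0C : RtoC c <> 0) by (intro E; apply (f_equal fst) in E; simpl in E; auto).
  assert (Hser : forall t, (Cmod t < e0)%R -> @is_pseries C_AbsRing C_NormedModule p t (genfun a b c t z)).
  { intros t Ht. destruct (Hsmall t Ht) as [H1 [H2 [H3 _]]].
    assert (Cm : forall x y : C, @mult C_AbsRing x y = mult y x) by (intros; apply Cmult_comm).
    pose proof (is_pseries_scal (/ RtoC c) _ _ _ (Cm _ _)
      (is_pseries_plus _ _ _ _ _
        (is_pseries_plus _ _ _ _ _
           (is_pseries_scal A _ _ _ (Cm _ _) (geom_ps U t H1))
           (is_pseries_scal B _ _ _ (Cm _ _) (geom_ps V t H2)))
        (is_pseries_scal D _ _ _ (Cm _ _) (geom_ps z t H3)))) as HS.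
    replace (genfun a b c t z) with (@scal C_AbsRing C_NormedModule (/RtoC c) (@plus C_NormedModule (@plus C_NormedModule (@scal C_AbsRing C_NormedModule A (/(1-U*t))) (@scal C_AbsRing C_NormedModule B (/(1-V*t)))) (@scal C_AbsRing C_NormedModule D (/(1-z*t))))).
    - eapply is_pseries_ext; [|exact HS]. intros n. unfold PS_scal, PS_plus, p.
      change (@scal C_AbsRing C_NormedModule) with Cmult. change (@plus C_NormedModule) with Cplus.
      reflexivity.
    - unfold genfun. change (@scal C_AbsRing C_NormedModule) with Cmult. change (@plus C_NormedModule) with Cplus.
      rewrite Hquad. pose proof (one_minus_nz _ H1). pose proof (one_minus_nz _ H2). pose proof (one_minus_nz _ H3).
      assert (1 - t * z <> 0) by (rewrite Cmult_comm; auto).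
      assert (V - U <> 0) by (intro E; apply HUV; replace (U - V) with (- (V - U)) by ring; rewrite E; ring).
      assert (z - U <> 0) by (intro E; apply HUz; replace (U - z) with (- (z - U)) by ring; rewrite E; ring).
      assert (z - V <> 0) by (intro E; apply HVz; replace (V - z) with (- (z - V)) by ring; rewrite E; ring).
      unfold A, B, D. match goal with |- ?x = ?y => change (@eq C x y) end. field. repeat split; auto. }
  assert (Heq : forall n, P n z = p n).
  { apply (uniqC (fun n => P n z) p (fun t => genfun a b c t z) e0); intros t Ht.
    - apply Heps. apply (Hsmall t Ht).
    - apply Hser; auto. }
  rewrite Heq in HP. unfold p in HP.
  assert (HVU : V - U <> 0) by (intro E; apply HUV; replace (U - V) with (- (V - U)) by ring; rewrite E; ring).
  assert (HzU : z - U <> 0) by (intro E; apply HUz; replace (U - z) with (- (z - U)) by ring; rewrite E; ring).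
  assert (HzV : z - V <> 0) by (intro E; apply HVz; replace (V - z) with (- (z - V)) by ring; rewrite E; ring).
  assert (E : U^2*U^m*(V - z) - V^2*V^m*(U - z) + z^2*z^m*(U - V) = 0).
  { transitivity (RtoC c * (U-V)*(U-z)*(V-z) * (/RtoC c * (A*U^m + B*V^m + D*z^m))).
    - unfold A,B,D. field. repeat split; auto.
    - rewrite HP. ring. }
  assert (E2 : z^2*z^m*(U-V) = z*(U^2*U^m - V^2*V^m) - U*V*(U*U^m - V*V^m)).
  { transitivity (z^2*z^m*(U-V) - (U^2*U^m*(V - z) - V^2*V^m*(U - z) + z^2*z^m*(U - V))).
    - rewrite E; ring.
    - ring. }
  set (X1 := (u^(S m) * Hs r (S m))%R). set (X0 := (u^m * Hs r m)%R).
  assert (R1 : (u^2*u^m - v^2*v^m = (u-v)*X1)%R).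
  { unfold v, X1. replace (u^2*u^m)%R with (u^(S(S m)))%R by (rewrite <- pow_add; reflexivity).
    replace ((r*u)^2*(r*u)^m)%R with ((r*u)^(S(S m)))%R by (rewrite <- pow_add; reflexivity).
    rewrite Hs_pow. ring. }
  assert (R0 : (u*u^m - v*v^m = (u-v)*X0)%R).
  { unfold v, X0. change (u*u^m)%R with (u^(S m))%R. change ((r*u)*(r*u)^m)%R with ((r*u)^(S m))%R.
    rewrite Hs_pow. ring. }
  assert (C1 : U^2*U^m - V^2*V^m = (U-V) * RtoC X1).
  { unfold U, V. rewrite <- !RtoC_pow, <- !RtoC_mult, <- !RtoC_minus, <- RtoC_mult. f_equal. exact R1. }
  assert (C0 : U*U^m - V*V^m = (U-V) * RtoC X0).
  { unfold U, V. rewrite <- !RtoC_pow, <- !RtoC_mult, <- !RtoC_minus, <- RtoC_mult. f_equal. exact R0. }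
  rewrite C1, C0 in E2.
  assert (E3 : z^2*z^m = z * RtoC X1 - U*V*RtoC X0).
  { assert (E4 : (U - V) * (z^2*z^m - (z * RtoC X1 - U*V*RtoC X0)) = 0).
    { transitivity (z^2*z^m*(U-V) - (z*((U-V)*RtoC X1) - U*V*((U-V)*RtoC X0))); [ring|].
      rewrite E2. ring. }
    apply Cmult_integral' in E4. destruct E4 as [E4|E4]; [contradiction|].
    replace (z^2*z^m) with (z^2*z^m - (z * RtoC X1 - U*V*RtoC X0) + (z * RtoC X1 - U*V*RtoC X0)) by ring.
    rewrite E4. ring. }
  assert (Hb1 : (Cmod (z^2*z^m) <= Cmod z * Rabs X1 + Rabs u * Rabs v * Rabs X0)%R).
  { rewrite E3. unfold Cminus. eapply Rle_trans; [apply Cmod_triangle|].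
    rewrite Cmod_opp, !Cmod_mult, !Cmod_R. fold U. fold V. rewrite HU, HV. lra. }
  pose proof (Hs_bounds r Hr m) as [Hh0 _].
  pose proof (Hs_bounds r Hr (S m)) as [Hh1 _].
  rewrite Cmod_mult, !Cmod_pow in Hb1.
  unfold X1, X0 in Hb1. rewrite !Rabs_mult, <- !RPow_abs, (Rabs_pos_eq (Hs r (S m))), (Rabs_pos_eq (Hs r m)) in Hb1 by lra.
  apply (final_ineq (Cmod z) (Rabs u) (Rabs u ^ m) r (Hs r m) (Hs r (S m)) m); auto.
  - apply pow_lt; auto.
  - apply pow_incr; split; [apply Rabs_pos|lra].
  - rewrite <- Hv. replace (Cmod z ^ S (S m))%R with (Cmod z ^ 2 * Cmod z ^ m)%R by (rewrite <- pow_add; reflexivity).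
    eapply Rle_trans; [exact Hb1|]. simpl (Rabs u ^ S m)%R. lra.
Qed.


Theorem theorem1 (a b c : R) (P : nat -> C -> C) (alpha : C) :
  (a * c < 0)%R -> b <> 0%R ->
  generates (genfun a b c) P ->
  RtoC a * alpha * alpha + RtoC b * alpha + RtoC c = 0 ->
  (forall beta : C, RtoC a * beta * beta + RtoC b * beta + RtoC c = 0 ->
     (Cmod alpha <= Cmod beta)%R) ->
  forall (m : nat) (z : C), P m z = 0 -> (Cmod z <= / Cmod alpha)%R.
Proof.
  intros Hac Hb Hgen Hroot Hmin m z HP.
  assert (Ha0 : a <> 0%R) by (intro E; rewrite E in Hac; lra).
  set (D := (b*b - 4*a*c)%R).
  assert (HD : (0 <= D)%R) by (unfold D; nra).
  set (s := sqrt D).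
  assert (Hs : (s * s = D)%R) by (apply sqrt_sqrt; auto).
  set (r1 := ((-b + s) / (2*a))%R). set (r2 := ((-b - s) / (2*a))%R).
  assert (S1 : (- b = a * (r1 + r2))%R) by (unfold r1, r2; field; auto).
  assert (S2 : (c = a * r1 * r2)%R).
  { unfold r1, r2. replace (a * ((- b + s) / (2 * a)) * ((- b - s) / (2 * a)))%R
      with ((b*b - s*s) / (4*a))%R by (field; auto). rewrite Hs. unfold D. field; auto. }
  assert (Fact : forall t, RtoC a * t * t + RtoC b * t + RtoC c = RtoC a * (t - RtoC r1) * (t - RtoC r2)).
  { intros t. replace (RtoC c) with (RtoC a * RtoC r1 * RtoC r2) by (rewrite <- !RtoC_mult; f_equal; auto).
    replace (RtoC b) with (- (RtoC a * (RtoC r1 + RtoC r2))) by (rewrite <- RtoC_plus, <- RtoC_mult, <- RtoC_opp; f_equal; lra).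
    ring. }
  assert (Ha0C : RtoC a <> 0) by (intro E; apply (f_equal fst) in E; simpl in E; auto).
  rewrite Fact in Hroot.
  assert (Hr1 : RtoC a * RtoC r1 * RtoC r1 + RtoC b * RtoC r1 + RtoC c = 0) by (rewrite Fact; ring).
  assert (Hr2 : RtoC a * RtoC r2 * RtoC r2 + RtoC b * RtoC r2 + RtoC c = 0) by (rewrite Fact; ring).
  apply Cmult_integral' in Hroot. destruct Hroot as [H|H].
  - apply Cmult_integral' in H. destruct H as [H|H]; [contradiction|].
    assert (Ea : alpha = RtoC r1) by (replace alpha with (alpha - RtoC r1 + RtoC r1) by ring; rewrite H; ring).
    specialize (Hmin _ Hr2). rewrite Ea, !Cmod_R in *.
    apply (core a b c r1 r2 P m z); auto.
  - assert (Ea : alpha = RtoC r2) by (replace alpha with (alpha - RtoC r2 + RtoC r2) by ring; rewrite H; ring).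
    specialize (Hmin _ Hr1). rewrite Ea, !Cmod_R in *.
    apply (core a b c r2 r1 P m z); auto.
    + rewrite S2. ring.
    + rewrite S1. ring.
Qed.
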